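(* For every term $q$, if $q=_{\mathrm{CLC}}F$ then $q\to^*_{\mathrm{CLC}}F$. In particular $T\neq_{\mathrm{CLC}}F$.
   Context: Terms are built from variables and the constants $C,T,F,K,S$ by binary application (left-associative). $\mathrm{CLC}$ is the conditional term rewriting system with rules $C\,T\,x\,y\to x$; $C\,F\,x\,y\to y$; $C\,z\,x\,y\to x \Leftarrow x=y$; $K\,x\,y\to x$; $S\,x\,y\,z\to x\,z\,(y\,z)$, where $=$ is convertibility in the system itself, defined by levels: $R_0$ interprets the condition as the empty relation, $R_{n+1}$ interprets $=$ as the conversion relation of $\to_{R_n}$, and $\to_{\mathrm{CLC}}=\bigcup_n\to_{R_n}$ (rewriting closed under contexts). $\to^*_{\mathrm{CLC}}$ is the reflexive–transitive closure and $=_{\mathrm{CLC}}$ the conversion relation. *)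

(* Defs.v *)
From Stdlib Require Import Relations.

Inductive term : Type :=
| Var : nat -> term
| cC : term
| cT : term
| cF : term
| cK : term
| cS : term
| App : term -> term -> term.

(* One-step rewriting closed under contexts, where the condition x = y of
   the conditional rule C z x y -> x is interpreted by the relation E. *)
Inductive step (E : term -> term -> Prop) : term -> term -> Prop :=
| step_CT : forall x y, step E (App (App (App cC cT) x) y) x
| step_CF : forall x y, step E (App (App (App cC cF) x) y) y
| step_Cz : forall z x y, E x y -> step E (App (App (App cC z) x) y) x
| step_K  : forall x y, step E (App (App cK x) y) x
| step_S  : forall x y z, step E (App (App (App cS x) y) z) (App (App x z) (App y z))
| step_appL : forall t t' u, step E t t' -> step E (App t u) (App t' u)
| step_appR : forall t u u', step E u u' -> step E (App t u) (App t u').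

Definition conv (R : relation term) : relation term := clos_refl_sym_trans term R.

Fixpoint Rlev (n : nat) : relation term :=
  match n with
  | O => step (fun _ _ => False)
  | Datatypes.S m => step (conv (Rlev m))
  end.

Definition clc_step : relation term := fun t u => exists n, Rlev n t u.

Definition clc_red : relation term := clos_refl_trans term clc_step.
Definition clc_conv : relation term := conv clc_step.

(* Main.v *)
Require Import Defs.
From Stdlib Require Import Relations List Lia.
Import ListNotations.

Fixpoint ap (h : term) (l : list term) : term :=
  match l with nil => h | a :: l' => App (ap h l') a end.

Lemma ap_app h l1 l2 : ap h (l1 ++ l2) = ap (ap h l2) l1.
Proof. induction l1; simpl; congruence. Qed.

Definition cst (b : bool) := if b then cT else cF.

Inductive hr : bool -> term -> Prop :=
| hr_T : hr true cT
| hr_F : hr false cF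
| hr_K : forall b x y l, hr b (ap x l) -> hr b (ap (App (App cK x) y) l)
| hr_S : forall b x y z l, hr b (ap (App (App x z) (App y z)) l) ->
    hr b (ap (App (App (App cS x) y) z) l)
| hr_CT : forall b z x y l, hr true z -> hr b (ap x l) ->
    hr b (ap (App (App (App cC z) x) y) l)
| hr_CF : forall b z x y l, hr false z -> hr b (ap y l) ->
    hr b (ap (App (App (App cC z) x) y) l)
| hr_Cz : forall b z x y l, clc_conv x y -> hr b (ap x l) -> hr b (ap y l) ->
    hr b (ap (App (App (App cC z) x) y) l).

Lemma step_mono (E E' : relation term) : (forall x y, E x y -> E' x y) ->
  forall t u, step E t u -> step E' t u.
Proof.
  intros H t u Hs; induction Hs;
  [apply step_CT|apply step_CF|apply step_Cz; auto|apply step_K|apply step_S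
  |apply step_appL; auto|apply step_appR; auto].
Qed.

Lemma conv_mono (R R' : relation term) : (forall x y, R x y -> R' x y) ->
  forall t u, conv R t u -> conv R' t u.
Proof.
  intros H t u Hc; induction Hc;
  [apply rst_step; auto|apply rst_refl|eapply rst_sym; eauto|eapply rst_trans; eauto].
Qed.

Lemma Rlev_S n t u : Rlev n t u -> Rlev (Datatypes.S n) t u.
Proof.
  revert t u; induction n; intros t u H; simpl in *.
  - eapply step_mono; [|exact H]. intros x y [].
  - eapply step_mono; [|exact H]. intros x y. apply conv_mono. exact IHn.
Qed.

Lemma Rlev_le n m t u : n <= m -> Rlev n t u -> Rlev m t u.
Proof. induction 1; auto. intros; apply Rlev_S; auto. Qed.

Lemma clc_conv_level x y : clc_conv x y -> exists n, conv (Rlev n) x y.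
Proof.
  induction 1.
  - destruct H as [n H]. exists n. apply rst_step; auto.
  - exists 0. apply rst_refl.
  - destruct IHclos_refl_sym_trans as [n H1]. exists n. apply rst_sym; auto.
  - destruct IHclos_refl_sym_trans1 as [n H1], IHclos_refl_sym_trans2 as [m H2].
    exists (Nat.max n m). eapply rst_trans.
    + eapply conv_mono; [|exact H1]. intros; eapply Rlev_le; [|eauto]; lia.
    + eapply conv_mono; [|exact H2]. intros; eapply Rlev_le; [|eauto]; lia.
Qed.

Lemma Rlev_appL n t t' a : Rlev n t t' -> Rlev n (App t a) (App t' a).
Proof. destruct n; simpl; apply step_appL. Qed.
Lemma Rlev_appR n t a a' : Rlev n a a' -> Rlev n (App t a) (App t a').
Proof. destruct n; simpl; apply step_appR. Qed.

Lemma clc_red_appL t t' a : clc_red t t' -> clc_red (App t a) (App t' a).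
Proof.
  induction 1; [destruct H as [n H]; apply rt_step; exists n; apply Rlev_appL; auto
  | apply rt_refl | eapply rt_trans; eauto].
Qed.
Lemma clc_red_appR t a a' : clc_red a a' -> clc_red (App t a) (App t a').
Proof.
  induction 1; [destruct H as [n H]; apply rt_step; exists n; apply Rlev_appR; auto
  | apply rt_refl | eapply rt_trans; eauto].
Qed.
Lemma clc_red_ap t t' l : clc_red t t' -> clc_red (ap t l) (ap t' l).
Proof. induction l; simpl; auto using clc_red_appL. Qed.

Lemma step_ap E t u l : step E t u -> step E (ap t l) (ap u l).
Proof. induction l; simpl; auto using step_appL. Qed.

Lemma clc_step0 t u : step (fun _ _ => False) t u -> clc_red t u.
Proof. intro H. apply rt_step. exists 0. exact H. Qed.

Lemma sound : forall b t, hr b t -> clc_red t (cst b).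
Proof.
  induction 1.
  - apply rt_refl.
  - apply rt_refl.
  - eapply rt_trans; [|exact IHhr]. apply clc_step0, step_ap, step_K.
  - eapply rt_trans; [|exact IHhr]. apply clc_step0, step_ap, step_S.
  - eapply rt_trans; [|exact IHhr2]. eapply rt_trans.
    + apply clc_red_ap. apply clc_red_appL, clc_red_appL, clc_red_appR. exact IHhr1.
    + apply clc_step0, step_ap, step_CT.
  - eapply rt_trans; [|exact IHhr2]. eapply rt_trans.
    + apply clc_red_ap. apply clc_red_appL, clc_red_appL, clc_red_appR. exact IHhr1.
    + apply clc_step0, step_ap, step_CF.
  - eapply rt_trans; [|exact IHhr1].
    destruct (clc_conv_level _ _ H) as [n Hn].
    apply rt_step. exists (Datatypes.S n). simpl. apply step_ap, step_Cz. exact Hn.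
Qed.
Inductive rstep (E : relation term) : term -> term -> Prop :=
| r_CT x y : rstep E (App (App (App cC cT) x) y) x
| r_CF x y : rstep E (App (App (App cC cF) x) y) y
| r_Cz z x y : E x y -> rstep E (App (App (App cC z) x) y) x
| r_K x y : rstep E (App (App cK x) y) x
| r_S x y z : rstep E (App (App (App cS x) y) z) (App (App x z) (App y z)).

Inductive dp (E : relation term) : term -> term -> Prop :=
| dp_refl t : dp E t t
| dp_root t u : rstep E t u -> dp E t u
| dp_app t t' a a' : dp E t t' -> dp E a a' -> dp E (App t a) (App t' a').

Lemma rstep_step E t u : rstep E t u -> step E t u.
Proof. destruct 1; constructor; auto. Qed.

Lemma step_dp E t u : step E t u -> dp E t u.
Proof.
  induction 1; try (apply dp_root; constructor; auto).
  - apply dp_app; auto using dp_refl.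
  - apply dp_app; auto using dp_refl.
Qed.

Lemma dp_clc E (HR : forall t u, rstep E t u -> clc_step t u) t u :
  dp E t u -> clc_red t u.
Proof.
  induction 1.
  - apply rt_refl.
  - apply rt_step; auto.
  - eapply rt_trans; [apply clc_red_appL; eauto | apply clc_red_appR; eauto].
Qed.

Lemma F2_refl E l : Forall2 (dp E) l l.
Proof. induction l; constructor; auto using dp_refl. Qed.

Lemma dp_ap E h h' l l' : dp E h h' -> Forall2 (dp E) l l' -> dp E (ap h l) (ap h' l').
Proof. intros H H2; induction H2; simpl; auto using dp_app. Qed.

Fixpoint hd t := match t with App t1 _ => hd t1 | _ => t end.
Fixpoint na t := match t with App t1 _ => Datatypes.S (na t1) | _ => 0 end.

Definition notapp (c : term) := forall t a, c <> App t a.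

Lemma hd_ap c l : notapp c -> hd (ap c l) = c.
Proof. intro Hc. induction l; simpl; auto. destruct c; auto. exfalso; eapply Hc; eauto. Qed.
Lemma na_ap c l : notapp c -> na (ap c l) = length l.
Proof. intro Hc. induction l; simpl; auto. destruct c; auto. exfalso; eapply Hc; eauto. Qed.

Lemma rstep_ap E c l R : notapp c -> rstep E (ap c l) R ->
  (c = cK /\ length l = 2) \/ (c = cS /\ length l = 3) \/ (c = cC /\ length l = 3).
Proof.
  intros Hc H. rewrite <- (hd_ap c l Hc), <- (na_ap c l Hc).
  destruct H; simpl; auto.
Qed.

Lemma dp_fwd E c (Hc : notapp c) : forall l u, dp E (ap c l) u ->
  (exists l', u = ap c l' /\ Forall2 (dp E) l l') \/
  (exists l1 l2 R' l1', l = l1 ++ l2 /\ rstep E (ap c l2) R' /\ u = ap R' l1'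
     /\ Forall2 (dp E) l1 l1').
Proof.
  induction l as [|a l IH]; intros u H; simpl in H.
  - inversion H; subst.
    + left. exists []. auto.
    + right. exists [], [], u, []. simpl. auto.
    + exfalso. eapply Hc; eauto.
  - inversion H; subst.
    + left. exists (a :: l). split; [reflexivity|]. apply F2_refl.
    + right. exists [], (a :: l), u, []. simpl. auto.
    + match goal with Hx : dp E (ap c l) _ |- _ => destruct (IH _ Hx) as [[l' [-> Hl]] | [l1 [l2 [R' [l1' [-> [Hr [-> Hl]]]]]]]] end.
      * left. exists (a' :: l'). simpl. auto.
      * right. exists (a :: l1), l2, R', (a' :: l1'). simpl. auto.
Qed.

Lemma dp_back E c (Hc : notapp c) : forall l q, dp E q (ap c l) ->
  (exists l0, q = ap c l0 /\ Forall2 (dp E) l0 l) \/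
  (exists R l0 l1 l2, q = ap R l0 /\ rstep E R (ap c l2) /\ Forall2 (dp E) l0 l1
     /\ l = l1 ++ l2).
Proof.
  induction l as [|a l IH]; intros q H; simpl in H.
  - inversion H; subst.
    + left. exists []. auto.
    + right. exists q, [], [], []. simpl. auto.
    + exfalso. eapply Hc; eauto.
  - inversion H; subst.
    + left. exists (a :: l). split; [reflexivity|]. apply F2_refl.
    + right. exists q, [], [], (a :: l). simpl. auto.
    + match goal with Hx : dp E _ (ap c l) |- _ => destruct (IH _ Hx) as [[l0 [-> Hl]] | [R [l0 [l1 [l2 [-> [Hr [Hl ->]]]]]]]] end; [left; eexists (_ :: l0); simpl; split; [reflexivity|]; auto | right; exists R; eexists (_ :: l0); exists (a :: l1), l2; simpl; split; [reflexivity|]; auto]. 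
Qed.
Lemma apK x y l : ap (App (App cK x) y) l = ap cK (l ++ [y; x]).
Proof. rewrite ap_app. reflexivity. Qed.
Lemma apS x y z l : ap (App (App (App cS x) y) z) l = ap cS (l ++ [z; y; x]).
Proof. rewrite ap_app. reflexivity. Qed.
Lemma apC z x y l : ap (App (App (App cC z) x) y) l = ap cC (l ++ [y; x; z]).
Proof. rewrite ap_app. reflexivity. Qed.

Lemma app2_inj (l l' : list term) a b a' b' :
  l ++ [a; b] = l' ++ [a'; b'] -> l = l' /\ a = a' /\ b = b'.
Proof.
  intro H. replace (l ++ [a; b]) with ((l ++ [a]) ++ [b]) in H by (rewrite <- app_assoc; reflexivity).
  replace (l' ++ [a'; b']) with ((l' ++ [a']) ++ [b']) in H by (rewrite <- app_assoc; reflexivity).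
  apply app_inj_tail in H as [H ->]. apply app_inj_tail in H as [-> ->]. auto.
Qed.
Lemma app3_inj (l l' : list term) a b c a' b' c' :
  l ++ [a; b; c] = l' ++ [a'; b'; c'] -> l = l' /\ a = a' /\ b = b' /\ c = c'.
Proof.
  intro H. replace (l ++ [a; b; c]) with ((l ++ [a]) ++ [b; c]) in H by (rewrite <- app_assoc; reflexivity).
  replace (l' ++ [a'; b'; c']) with ((l' ++ [a']) ++ [b'; c']) in H by (rewrite <- app_assoc; reflexivity).
  apply app2_inj in H as [H [-> ->]]. apply app_inj_tail in H as [-> ->]. auto.
Qed.

Lemma F2_tail2 (R : relation term) l a b l' :
  Forall2 R (l ++ [a; b]) l' -> exists la a' b', l' = la ++ [a'; b'] /\ Forall2 R l la /\ R a a' /\ R b b'.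
Proof.
  intro H. apply Forall2_app_inv_l in H as [la [lb [H1 [H2 ->]]]].
  inversion_clear H2 as [|? ? ? ? Ha H3]; inversion_clear H3 as [|? ? ? ? Hb H4]; inversion_clear H4; eauto 10.
Qed.
Lemma F2_tail3 (R : relation term) l a b c l' :
  Forall2 R (l ++ [a; b; c]) l' -> exists la a' b' c', l' = la ++ [a'; b'; c'] /\ Forall2 R l la /\ R a a' /\ R b b' /\ R c c'.
Proof.
  intro H. apply Forall2_app_inv_l in H as [la [lb [H1 [H2 ->]]]].
  inversion_clear H2 as [|? ? ? ? Ha H3]; inversion_clear H3 as [|? ? ? ? Hb H4]; inversion_clear H4 as [|? ? ? ? Hc H5]; inversion_clear H5; eauto 12.
Qed.
Lemma F2_tail2r (R : relation term) l a b l0 :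
  Forall2 R l0 (l ++ [a; b]) -> exists la a' b', l0 = la ++ [a'; b'] /\ Forall2 R la l /\ R a' a /\ R b' b.
Proof.
  intro H. apply Forall2_app_inv_r in H as [la [lb [H1 [H2 ->]]]].
  inversion_clear H2 as [|? ? ? ? Ha H3]; inversion_clear H3 as [|? ? ? ? Hb H4]; inversion_clear H4; eauto 10.
Qed.
Lemma F2_tail3r (R : relation term) l a b c l0 :
  Forall2 R l0 (l ++ [a; b; c]) -> exists la a' b' c', l0 = la ++ [a'; b'; c'] /\ Forall2 R la l /\ R a' a /\ R b' b /\ R c' c.
Proof.
  intro H. apply Forall2_app_inv_r in H as [la [lb [H1 [H2 ->]]]].
  inversion_clear H2 as [|? ? ? ? Ha H3]; inversion_clear H3 as [|? ? ? ? Hb H4]; inversion_clear H4 as [|? ? ? ? Hc H5]; inversion_clear H5; eauto 12.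
Qed.

Lemma ap_isApp t a l : exists t' a', ap (App t a) l = App t' a'.
Proof. destruct l; simpl; eauto. Qed.

Lemma hr_const b t : hr b t -> (t = cT -> b = true) /\ (t = cF -> b = false).
Proof.
  destruct 1; split; intro E; try reflexivity; try discriminate;
  match type of E with ap (App ?t ?a) ?l = _ =>
    destruct (ap_isApp t a l) as [? [? Hx]]; rewrite Hx in E; discriminate end.
Qed.

Definition HPhi (E : relation term) :=
  forall x y, E x y -> forall b l, hr b (ap x l) <-> hr b (ap y l).

Lemma RE E (HEc : forall x y, E x y -> clc_conv x y) (HP : HPhi E) :
  forall R R', rstep E R R' -> forall b l, hr b (ap R' l) -> hr b (ap R l).
Proof.
  destruct 1 as [x y|x y|z x y Hxy|x y|x y z]; intros b l H.
  - apply hr_CT; [apply hr_T | exact H].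
  - apply hr_CF; [apply hr_F | exact H].
  - apply hr_Cz; auto. apply (HP _ _ Hxy); auto.
  - apply hr_K; auto.
  - apply hr_S; auto.
Qed.

Lemma dp_conv E (HR : forall t u, rstep E t u -> clc_step t u) x y x' y' :
  clc_conv x y -> dp E x x' -> dp E y y' -> clc_conv x' y'.
Proof.
  intros H Hx Hy. apply (dp_clc E HR) in Hx. apply (dp_clc E HR) in Hy.
  apply clos_rt_clos_rst in Hx, Hy.
  eapply rst_trans; [apply rst_sym; exact Hx|]. eapply rst_trans; [exact H| exact Hy].
Qed.

Lemma nK : notapp cK. Proof. intros t a H; discriminate. Qed.
Lemma nS : notapp cS. Proof. intros t a H; discriminate. Qed.
Lemma nC : notapp cC. Proof. intros t a H; discriminate. Qed.
Lemma nT : notapp cT. Proof. intros t a H; discriminate. Qed.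
Lemma nF : notapp cF. Proof. intros t a H; discriminate. Qed.
Lemma Bfwd E (HR : forall t u, rstep E t u -> clc_step t u) (HP : HPhi E) :
  forall b q, hr b q -> forall u, dp E q u -> hr b u.
Proof.
  induction 1 as [ | | b x y l H IH | b x y z l H IH | b z x y l Hz IHz H IH
                 | b z x y l Hz IHz H IH | b z x y l Hxy Hx IHx Hy IHy]; intros u Hd.
  - inversion Hd; subst; [apply hr_T | match goal with H : rstep _ _ _ |- _ => inversion H end].
  - inversion Hd; subst; [apply hr_F | match goal with H : rstep _ _ _ |- _ => inversion H end].
  - rewrite apK in Hd.
    destruct (dp_fwd E cK nK _ _ Hd) as [[l' [-> Hl]] | [l1 [l2 [R' [l1' [Heq [Hr [-> Hl]]]]]]]].
    + apply F2_tail2 in Hl as [la [y' [x' [-> [Hla [Hy' Hx']]]]]].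
      rewrite <- apK. apply hr_K. apply IH. apply dp_ap; auto.
    + destruct (rstep_ap _ _ _ _ nK Hr) as [[_ Hlen]|[[Habs _]|[Habs _]]]; try discriminate.
      destruct l2 as [|a1 [|a2 [|a3 l2]]]; simpl in Hlen; try discriminate.
      apply app2_inj in Heq as [-> [-> ->]]. simpl in Hr. inversion Hr; subst.
      apply IH. apply dp_ap; auto using dp_refl.
  - rewrite apS in Hd.
    destruct (dp_fwd E cS nS _ _ Hd) as [[l' [-> Hl]] | [l1 [l2 [R' [l1' [Heq [Hr [-> Hl]]]]]]]].
    + apply F2_tail3 in Hl as [la [z' [y' [x' [-> [Hla [Hz' [Hy' Hx']]]]]]]].
      rewrite <- apS. apply hr_S. apply IH. apply dp_ap; auto.
      apply dp_app; apply dp_app; auto.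
    + destruct (rstep_ap _ _ _ _ nS Hr) as [[Habs _]|[[_ Hlen]|[Habs _]]]; try discriminate.
      destruct l2 as [|a1 [|a2 [|a3 [|a4 l2]]]]; simpl in Hlen; try discriminate.
      apply app3_inj in Heq as [-> [-> [-> ->]]]. simpl in Hr. inversion Hr; subst.
      apply IH. apply dp_ap; auto using dp_refl.
  - rewrite apC in Hd.
    destruct (dp_fwd E cC nC _ _ Hd) as [[l' [-> Hl]] | [l1 [l2 [R' [l1' [Heq [Hr [-> Hl]]]]]]]].
    + apply F2_tail3 in Hl as [la [y' [x' [z' [-> [Hla [Hy' [Hx' Hz']]]]]]]].
      rewrite <- apC. apply hr_CT; auto. apply IH. apply dp_ap; auto.
    + destruct (rstep_ap _ _ _ _ nC Hr) as [[Habs _]|[[Habs _]|[_ Hlen]]]; try discriminate.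
      destruct l2 as [|a1 [|a2 [|a3 [|a4 l2]]]]; simpl in Hlen; try discriminate.
      apply app3_inj in Heq as [-> [-> [-> ->]]]. simpl in Hr. inversion Hr; subst.
      * apply IH. apply dp_ap; auto using dp_refl.
      * exfalso. apply hr_const in Hz. destruct Hz as [_ Hz]. specialize (Hz eq_refl). discriminate.
      * apply IH. apply dp_ap; auto using dp_refl.
  - rewrite apC in Hd.
    destruct (dp_fwd E cC nC _ _ Hd) as [[l' [-> Hl]] | [l1 [l2 [R' [l1' [Heq [Hr [-> Hl]]]]]]]].
    + apply F2_tail3 in Hl as [la [y' [x' [z' [-> [Hla [Hy' [Hx' Hz']]]]]]]].
      rewrite <- apC. apply hr_CF; auto. apply IH. apply dp_ap; auto.
    + destruct (rstep_ap _ _ _ _ nC Hr) as [[Habs _]|[[Habs _]|[_ Hlen]]]; try discriminate.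
      destruct l2 as [|a1 [|a2 [|a3 [|a4 l2]]]]; simpl in Hlen; try discriminate.
      apply app3_inj in Heq as [-> [-> [-> ->]]]. simpl in Hr. inversion Hr; subst.
      * exfalso. apply hr_const in Hz. destruct Hz as [Hz _]. specialize (Hz eq_refl). discriminate.
      * apply IH. apply dp_ap; auto using dp_refl.
      * match goal with Hc : E _ _ |- _ => apply (HP _ _ Hc) end. apply IH. apply dp_ap; auto using dp_refl.
  - rewrite apC in Hd.
    destruct (dp_fwd E cC nC _ _ Hd) as [[l' [-> Hl]] | [l1 [l2 [R' [l1' [Heq [Hr [-> Hl]]]]]]]].
    + apply F2_tail3 in Hl as [la [y' [x' [z' [-> [Hla [Hy' [Hx' Hz']]]]]]]].
      rewrite <- apC. apply hr_Cz.
      * eapply dp_conv; eauto.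
      * apply IHx. apply dp_ap; auto.
      * apply IHy. apply dp_ap; auto.
    + destruct (rstep_ap _ _ _ _ nC Hr) as [[Habs _]|[[Habs _]|[_ Hlen]]]; try discriminate.
      destruct l2 as [|a1 [|a2 [|a3 [|a4 l2]]]]; simpl in Hlen; try discriminate.
      apply app3_inj in Heq as [-> [-> [-> ->]]]. simpl in Hr. inversion Hr; subst.
      * apply IHx. apply dp_ap; auto using dp_refl.
      * apply IHy. apply dp_ap; auto using dp_refl.
      * apply IHx. apply dp_ap; auto using dp_refl.
Qed.
Lemma A_wrap E (HEc : forall x y, E x y -> clc_conv x y) (HP : HPhi E) c (Hc : notapp c) b L :
  (forall l0, Forall2 (dp E) l0 L -> hr b (ap c l0)) ->
  forall q, dp E q (ap c L) -> hr b q.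
Proof.
  intros H q Hd.
  destruct (dp_back E c Hc L q Hd) as [[l0 [-> Hl]] | [R [l0 [l1 [l2 [-> [Hr [Hl ->]]]]]]]].
  - auto.
  - apply (RE E HEc HP _ _ Hr). rewrite <- ap_app. apply H.
    apply Forall2_app; auto using F2_refl.
Qed.

Lemma Abwd E (HEc : forall x y, E x y -> clc_conv x y)
  (HR : forall t u, rstep E t u -> clc_step t u) (HP : HPhi E) :
  forall b u, hr b u -> forall q, dp E q u -> hr b q.
Proof.
  induction 1 as [ | | b x y l H IH | b x y z l H IH | b z x y l Hz IHz H IH
                 | b z x y l Hz IHz H IH | b z x y l Hxy Hx IHx Hy IHy]; intros q Hd.
  - change cT with (ap cT []) in Hd. revert q Hd. apply (A_wrap E HEc HP cT nT).
    intros l0 Hl. inversion Hl. apply hr_T.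
  - change cF with (ap cF []) in Hd. revert q Hd. apply (A_wrap E HEc HP cF nF).
    intros l0 Hl. inversion Hl. apply hr_F.
  - rewrite apK in Hd. revert q Hd. apply (A_wrap E HEc HP cK nK).
    intros l0 Hl. apply F2_tail2r in Hl as [la [y' [x' [-> [Hla [Hy' Hx']]]]]].
    rewrite <- apK. apply hr_K. apply IH. apply dp_ap; auto.
  - rewrite apS in Hd. revert q Hd. apply (A_wrap E HEc HP cS nS).
    intros l0 Hl. apply F2_tail3r in Hl as [la [z' [y' [x' [-> [Hla [Hz' [Hy' Hx']]]]]]]].
    rewrite <- apS. apply hr_S. apply IH. apply dp_ap; auto.
    apply dp_app; apply dp_app; auto.
  - rewrite apC in Hd. revert q Hd. apply (A_wrap E HEc HP cC nC).
    intros l0 Hl. apply F2_tail3r in Hl as [la [y' [x' [z' [-> [Hla [Hy' [Hx' Hz']]]]]]]].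
    rewrite <- apC. apply hr_CT; auto. apply IH. apply dp_ap; auto.
  - rewrite apC in Hd. revert q Hd. apply (A_wrap E HEc HP cC nC).
    intros l0 Hl. apply F2_tail3r in Hl as [la [y' [x' [z' [-> [Hla [Hy' [Hx' Hz']]]]]]]].
    rewrite <- apC. apply hr_CF; auto. apply IH. apply dp_ap; auto.
  - rewrite apC in Hd. revert q Hd. apply (A_wrap E HEc HP cC nC).
    intros l0 Hl. apply F2_tail3r in Hl as [la [y' [x' [z' [-> [Hla [Hy' [Hx' Hz']]]]]]]].
    rewrite <- apC. apply hr_Cz.
    + apply (dp_clc E HR) in Hx', Hy'. apply clos_rt_clos_rst in Hx', Hy'.
      eapply rst_trans; [exact Hx'|]. eapply rst_trans; [exact Hxy|]. apply rst_sym; exact Hy'.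
    + apply IHx. apply dp_ap; auto.
    + apply IHy. apply dp_ap; auto.
Qed.

Definition En (n : nat) : relation term :=
  match n with O => fun _ _ => False | Datatypes.S m => conv (Rlev m) end.

Lemma Rlev_En n t u : Rlev n t u <-> step (En n) t u.
Proof. destruct n; simpl; tauto. Qed.

Lemma En_conv n x y : En n x y -> clc_conv x y.
Proof.
  destruct n; simpl; [tauto|]. apply conv_mono. intros a b H. exists n; exact H.
Qed.

Lemma En_R n t u : rstep (En n) t u -> clc_step t u.
Proof. intro H. exists n. apply Rlev_En. apply rstep_step; auto. Qed.

Lemma Phi_of n : HPhi (En n) -> forall x y, conv (Rlev n) x y ->
  forall b l, hr b (ap x l) <-> hr b (ap y l).
Proof.
  intros HP x y H. induction H as [x y H| x | x y H IH | x y z H1 IH1 H2 IH2]; intros b l.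
  - apply Rlev_En in H. apply (step_ap _ _ _ l) in H. apply step_dp in H. split; intro Hh.
    + eapply Bfwd; [apply En_R|exact HP|exact Hh|exact H].
    + eapply Abwd; [apply En_conv|apply En_R|exact HP|exact Hh|exact H].
  - tauto.
  - symmetry; auto.
  - rewrite IH1; auto.
Qed.

Lemma Phi : forall n, HPhi (En n).
Proof.
  induction n.
  - intros x y [].
  - intros x y H. simpl in H. apply (Phi_of n IHn); auto.
Qed.

Theorem mainTheorem3 :
  (forall q : term, clc_conv q cF -> clc_red q cF) /\ ~ clc_conv cT cF.
Proof.
  split.
  - intros q H. apply clc_conv_level in H as [n H].
    apply (sound false). apply (proj2 (Phi_of n (Phi n) q cF H false [])). apply hr_F.
  - intro H. apply clc_conv_level in H as [n H].
    pose proof (proj2 (Phi_of n (Phi n) _ _ H false []) hr_F) as HT. simpl in HT.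
    apply hr_const in HT. destruct HT as [HT _]. specialize (HT eq_refl). discriminate.
Qed.
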